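(* Let $\mathcal{T}$ be a finite or countably infinite set, let $\prec$ be a strict total order on $\mathcal{T}$, and let $\mathbf{p} \ne \mathbf{q}$ be two probability distributions on $\mathcal{T}$. For each positive integer $m$, let $X_0 \sim \mathbf{q}$, $X_1,\dots,X_m \sim^{\mathrm{iid}} \mathbf{p}$, $U_0,\dots,U_m \sim^{\mathrm{iid}} \mathrm{Uniform}(0,1)$ be mutually independent, and let $R_m = \sum_{j=1}^m \big(\mathbb{I}[X_j \prec X_0] + \mathbb{I}[X_j = X_0, U_j < U_0]\big)$. Let $M \ge 1$ be such that $R_M$ is not uniformly distributed on $\{0,1,\dots,M\}$. Then for all $m \ge M$, $R_m$ is not uniformly distributed on $\{0,1,\dots,m\}$.
   Context: $\mathbb{I}[\cdot]$ denotes the indicator of an event. (Such an $M$ exists whenever $\mathbf{p}\neq\mathbf{q}$.) *)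

(* Defs.v *)
From HB Require Import structures.
From mathcomp Require Import all_boot all_order all_algebra.
From mathcomp Require Import all_classical all_reals all_analysis.
Set Implicit Arguments. Unset Strict Implicit. Unset Printing Implicit Defensive.
Import Order.TTheory GRing.Theory Num.Theory.
Local Open Scope classical_set_scope.
Local Open Scope ring_scope.

Definition strict_total_order (T : eqType) (lt : rel T) : Prop :=
  [/\ (forall x, ~~ lt x x),
      (forall x y z, lt x y -> lt y z -> lt x z) &
      (forall x y, x != y -> lt x y \/ lt y x)].

(* Mutual independence of the whole family (X_i)_{i : nat}, (U_i)_{i : nat}:
   product rule for every finite initial block of indices 0..n, with arbitrary
   events {X_i \in A_i} (T carries the discrete sigma-algebra) and measurable
   events {U_i \in B_i}.  Taking A_i = setT / B_i = setT yields every finite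
   subfamily, so this is exactly mutual independence. *)
Definition mutually_independent (d : measure_display) (Omega : measurableType d)
  (R : realType) (P : probability Omega R) (T : Type)
  (X : nat -> Omega -> T) (U : nat -> Omega -> R) : Prop :=
  forall (n : nat) (A : nat -> set T) (B : nat -> set R),
    (forall i, measurable (B i)) ->
    P (\bigcap_(i in `I_n.+1) ((X i @^-1` A i) `&` (U i @^-1` B i))) =
    (\prod_(i < n.+1) (P (X i @^-1` A i) * P (U i @^-1` B i)))%E.

Definition rank_stat (R : realType) (T : eqType) (Omega : Type) (lt : rel T)
  (X : nat -> Omega -> T) (U : nat -> Omega -> R) (m : nat) (w : Omega) : nat :=
  (\sum_(1 <= j < m.+1)
     (lt (X j w) (X 0%N w) + ((X j w == X 0%N w) && (U j w < U 0%N w))%R))%N.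

Definition uniform_on_0m (d : measure_display) (Omega : measurableType d)
  (R : realType) (P : probability Omega R) (Y : Omega -> nat) (m : nat) : Prop :=
  forall k : nat, (k <= m)%N -> P (Y @^-1` [set k]) = ((m.+1%:R)^-1)%:E.

(* Main.v *)
Require Import Defs.
From HB Require Import structures.
From mathcomp Require Import all_boot all_order all_algebra.
From mathcomp Require Import all_classical all_reals all_analysis.
From mathcomp Require Import zify.
From mathcomp Require Import measurable_realfun.
From mathcomp Require Import ring lra.
Import Order.TTheory GRing.Theory Num.Theory.
Local Open Scope classical_set_scope.
Local Open Scope ring_scope.

Definition WW (R : realType) := nat -> nat * R.
HB.instance Definition _ (R : realType) := gen_eqMixin (WW R).
HB.instance Definition _ (R : realType) := gen_choiceMixin (WW R).
HB.instance Definition _ (R : realType) := isPointed.Build (WW R) (fun _ => (0%N, 0)).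

Lemma big_inv (V : Type) (idx : V) (op : Monoid.com_law idx) (a b : nat)
  (s : nat -> nat) (F : nat -> V) :
  (forall i, (a <= i < b)%N -> (a <= s i < b)%N) ->
  (forall i, (a <= i < b)%N -> s (s i) = i) ->
  \big[op/idx]_(a <= i < b) F (s i) = \big[op/idx]_(a <= i < b) F i.
Proof.
move=> hs hss.
rewrite -(big_map s xpredT F); apply: perm_big.
apply: uniq_perm.
- rewrite map_inj_in_uniq ?iota_uniq // => x y.
  rewrite !mem_index_iota => hx hy hxy.
  by rewrite -(hss x hx) hxy hss.
- exact: iota_uniq.
- move=> x; apply/mapP/idP.
  + by case=> y; rewrite !mem_index_iota => /hs hy ->.
  + rewrite mem_index_iota => hx; exists (s x); first by rewrite mem_index_iota; exact: hs.
    by rewrite hss.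
Qed.

Section A.
Variables (R : realType) (T : countType) (d : measure_display)
  (Omega : measurableType d) (X : nat -> Omega -> T) (U : nat -> Omega -> R).
Hypothesis hX : forall i t, measurable (X i @^-1` [set t]).
Hypothesis hU : forall i, measurable_fun setT (U i).
Variable (P : probability Omega R) (p : T -> R) (lt : rel T).
Hypothesis hind : mutually_independent P X U.
Hypothesis hp : forall j t, (1 <= j)%N -> P (X j @^-1` [set t]) = (p t)%:E.
Hypothesis hunif : forall i (B : set R), measurable B ->
     P (U i @^-1` B) = lebesgue_measure (B `&` `[0, 1]%classic).
Hypothesis hirr : forall x, ~~ lt x x.
Variable m : nat.

Definition Aset (a : option nat) : set nat :=
  match a with Some t => [set t] | None => setT end.

Definition rect (a : nat -> option nat) (B : nat -> set R) : set (WW R) :=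
  [set z | forall i, (i <= m)%N -> Aset (a i) (z i).1 /\ B i (z i).2].

Definition GG : set (set (WW R)) :=
  [set S | exists a B, (forall i, measurable (B i)) /\ S = rect a B].

Definition compat (a a' : option nat) : bool :=
  match a, a' with Some t, Some s => t == s | _, _ => true end.

Definition comb (a a' : option nat) : option nat :=
  match a with Some t => Some t | None => a' end.

Lemma GG_setI : setI_closed GG.
Proof.
move=> S1 S2 [a [B [mB ->]]] [a' [B' [mB' ->]]].
exists (fun i => comb (a i) (a' i)),
  (fun i => B i `&` B' i `&` [set _ | compat (a i) (a' i)]); split.
  move=> i; apply: measurableI; first exact: measurableI.
  case: (compat _ _).
    by rewrite (_ : [set _ | true] = setT) //; apply/seteqP; split.
  by rewrite (_ : [set _ | false] = set0) //; apply/seteqP; split.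
apply/seteqP; split => z /=.
- move=> [h1 h2] i hi; have [A1 B1] := h1 i hi; have [A2 B2] := h2 i hi.
  move: A1 A2; rewrite /comb /compat; case: (a i) => [t|]; case: (a' i) => [s|] //=;
    by move=> -> ->; split.
- move=> h; split=> i hi; have [A [[B1 B2] C]] := h i hi; split => //;
  move: A C; rewrite /comb /compat; case: (a i) => [t|]; case: (a' i) => [s|] //=;
    by move=> -> /eqP.
Qed.

Definition Z (w : Omega) : WW R := fun i => (pickle (X i w), U i w).

Definition XA (a : option nat) : set T := [set x | Aset a (pickle x)].

Lemma XA_pre i a : X i @^-1` XA a =
  match a with
  | Some t => match @pickle_inv T t with Some x => X i @^-1` [set x] | None => set0 end
  | None => setT end.
Proof.
case: a => [t|] /=; last by apply/seteqP; split.
case E: (pickle_inv t) => [x|]; apply/seteqP; split => w /=.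
- by rewrite /XA /= => h; move: E; rewrite -h pickleK_inv => -[].
- by move=> ->; rewrite /XA /=; move: (@pickle_invK T t); rewrite E.
- by rewrite /XA /= => h; move: E; rewrite -h pickleK_inv.
- by [].
Qed.

Lemma mXA i a : measurable (X i @^-1` XA a).
Proof.
rewrite XA_pre; case: a => [t|] //; case: (pickle_inv t) => [x|] //.
Qed.

Lemma Z_rect a B : Z @^-1` rect a B =
  \bigcap_(i in `I_m.+1) ((X i @^-1` XA (a i)) `&` (U i @^-1` B i)).
Proof.
apply/seteqP; split => w /=.
- by move=> h i /= hi; apply: h.
- by move=> h i hi; apply: (h i).
Qed.

Lemma mZ_rect a B : (forall i, measurable (B i)) -> measurable (Z @^-1` rect a B).
Proof.
move=> mB; rewrite Z_rect; apply: bigcap_measurableType => i _.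
apply: measurableI; first exact: mXA.
by rewrite -(setTI (U i @^-1` B i)); apply: hU.
Qed.

Lemma mZ (S : set (WW R)) : <<s GG >> S -> measurable (Z @^-1` S).
Proof.
move=> hS.
apply: (@dynkin_induction _ (g_sigma_algebraType GG) GG
   [set S | measurable (Z @^-1` S)] erefl GG_setI _ _ _ _ S hS).
- by rewrite /= preimage_setT.
- by move=> A [a [B [mB ->]]]; exact: mZ_rect.
- by move=> A _ /=; rewrite -preimage_setC; exact: measurableC.
- by move=> F _ _ hF /=; rewrite preimage_bigcup; exact: bigcupT_measurable.
Qed.


Section B.
Variable j : nat.
Hypothesis hj1 : (1 <= j)%N.
Hypothesis hjm : (j <= m)%N.

Definition sw (i : nat) : nat := if i == j then m else if i == m then j else i.

Lemma sw_inv i : sw (sw i) = i.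
Proof.
rewrite /sw; repeat case: ifP => /eqP; congruence.
Qed.

Lemma sw_range i : (i <= m)%N -> (sw i <= m)%N.
Proof. by rewrite /sw; case: eqP => // _; case: eqP. Qed.

Lemma sw_ge1 i : (1 <= i)%N -> (1 <= sw i)%N.
Proof.
rewrite /sw; case: eqP => _ hi; last by case: eqP.
exact: leq_trans hj1 hjm.
Qed.

Lemma sw0 : sw 0 = 0%N.
Proof.
rewrite /sw; case: eqP => [h|_]; first by move: hj1; rewrite -h.
case: eqP => // h; move: hjm hj1; rewrite -h; case: (j) => //.
Qed.

Definition Zsw (w : Omega) : WW R := fun i => Z w (sw i).

Lemma Zsw_rect a B : Zsw @^-1` rect a B = Z @^-1` rect (a \o sw) (B \o sw).
Proof.
apply/seteqP; split => w /=.
- move=> h i hi; have := h (sw i) (sw_range _ hi); rewrite /Zsw sw_inv; by [].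
- by move=> h i hi; have := h (sw i) (sw_range _ hi); rewrite /= sw_inv.
Qed.

Lemma P_rect a B : (forall i, measurable (B i)) ->
  P (Z @^-1` rect a B) =
  (\prod_(i < m.+1) (P (X i @^-1` XA (a i)) * P (U i @^-1` B i)))%E.
Proof. by move=> mB; rewrite Z_rect; exact: hind. Qed.

Lemma lawX i i' k : (1 <= i)%N -> (1 <= i')%N ->
  P (X i @^-1` XA k) = P (X i' @^-1` XA k).
Proof.
move=> hi hi'; rewrite !XA_pre; case: k => [t|] //.
by case: (pickle_inv t) => [x|] //; rewrite !hp.
Qed.

Lemma lawU i i' B : measurable B -> P (U i @^-1` B) = P (U i' @^-1` B).
Proof. by move=> mB; rewrite !hunif. Qed.

Lemma P_rect_sw a B : (forall i, measurable (B i)) ->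
  P (Z @^-1` rect (a \o sw) (B \o sw)) = P (Z @^-1` rect a B).
Proof.
move=> mB; rewrite !P_rect //; last by move=> i; exact: mB.
set f := fun i k => (P (X i @^-1` XA (a k)) * P (U i @^-1` B k))%E.
rewrite -[LHS](big_mkord (fun _ => true) (fun i => f i (sw i))).
rewrite -[RHS](big_mkord (fun _ => true) (fun i => f i i)).
transitivity (\prod_(0 <= i < m.+1) f (sw i) (sw i))%E.
  apply: eq_big_nat => i /andP [_ hi]; rewrite /f.
  have hf : forall i', i' = i \/ (1 <= i)%N /\ (1 <= i')%N ->
      (P (X i @^-1` XA (a (sw i))) * P (U i @^-1` B (sw i)))%E =
      (P (X i' @^-1` XA (a (sw i))) * P (U i' @^-1` B (sw i)))%E.
    move=> i' [->//|[h1 h2]]; by rewrite (lawX _ _ _ h1 h2) (lawU i i' _ (mB _)).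
  apply: hf; rewrite /sw; case: (eqVneq i j) => [->|hij].
    by right; split => //; exact: leq_trans hj1 hjm.
  case: (eqVneq i m) => [->|him]; last by left.
  by right; split => //; exact: leq_trans hj1 hjm.
have := @big_inv _ _ ( *%E : Monoid.com_law 1%E) 0 m.+1 sw (fun i => f i i).
rewrite /=; apply.
  by move=> i hi; apply: sw_range.
by move=> i _; exact: sw_inv.
Qed.

Lemma sym (S : set (WW R)) : <<s GG >> S -> P (Z @^-1` S) = P (Zsw @^-1` S).
Proof.
move=> hS.
suff : [set S | measurable (Z @^-1` S) /\ measurable (Zsw @^-1` S) /\
        P (Z @^-1` S) = P (Zsw @^-1` S)] S by case=> _ [].
apply: (@dynkin_induction _ (g_sigma_algebraType GG) GG _ erefl GG_setI _ _ _ _ S hS).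
- by rewrite /= !preimage_setT.
- move=> A [a [B [mB ->]]]; rewrite /= Zsw_rect; split; first exact: mZ_rect.
  split; first by apply: mZ_rect => i; exact: mB.
  by rewrite P_rect_sw.
- move=> A _ [h1 [h2 h3]] /=; rewrite -!preimage_setC.
  split; first exact: measurableC.
  split; first exact: measurableC.
  by rewrite !probability_setC // h3.
- move=> F _ tF hF /=; rewrite !preimage_bigcup.
  split; first by apply: bigcupT_measurable => n; case: (hF n).
  split; first by apply: bigcupT_measurable => n; case: (hF n) => _ [].
  have tr : forall g : Omega -> WW R, trivIset setT (fun n => g @^-1` F n).
    move=> g i k _ _ [w [h1 h2]]; apply: (tF i k) => //; by exists (g w).
  rewrite !measure_bigcup //; first by apply: eq_eseriesr => n _; case: (hF n) => _ [].
  + by move=> n _; case: (hF n) => _ [].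
  + by move=> n _; case: (hF n).
Qed.
End B.

Definition ltn' (a b : nat) : bool :=
  match @pickle_inv T a, @pickle_inv T b with Some x, Some y => lt x y | _, _ => false end.
Definition ind (i : nat) (z : WW R) : nat :=
  (ltn' (z i).1 (z 0%N).1 + (((z i).1 == (z 0%N).1) && ((z i).2 < (z 0%N).2)%R))%N.
Definition rk (n : nat) (z : WW R) : nat := (\sum_(1 <= i < n.+1) ind i z)%N.

Lemma rank_Z n w : rank_stat lt X U n w = rk n (Z w).
Proof.
rewrite /rank_stat /rk; apply: eq_bigr => i _.
by rewrite /ind /Z /= /ltn' !pickleK_inv (inj_eq (pcan_inj (@pickleK T))).
Qed.

Lemma ltn'_irr a : ltn' a a = false.
Proof. by rewrite /ltn'; case: pickle_inv => // x; apply/negbTE/hirr. Qed.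

Lemma ind_le1 i z : (ind i z <= 1)%N.
Proof.
rewrite /ind; case: eqP => [->|_]; first by rewrite ltn'_irr; case: (_ < _).
by rewrite addn0; case: ltn'.
Qed.

Lemma ind1 i z : (ind i z = 1)%N <->
  ltn' (z i).1 (z 0%N).1 \/ ((z i).1 = (z 0%N).1 /\ (z i).2 < (z 0%N).2).
Proof.
rewrite /ind; case: eqP => [->|ne].
  rewrite ltn'_irr /=; split; first by case: (_ < _) => // _; right.
  by case => // -[_ ->].
rewrite addn0; split; first by case: ltn' => // _; left.
by case=> [->//|[]].
Qed.

Local Notation mW := (@measurable _ (g_sigma_algebraType GG)).

Lemma mW_const (Pr : Prop) : mW [set _ : WW R | Pr].
Proof.
case: (pselect Pr) => h.
  by rewrite (_ : [set _ | Pr] = setT) //; apply/seteqP; split.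
by rewrite (_ : [set _ | Pr] = set0) //; apply/seteqP; split.
Qed.

Lemma mW_fst i t : (i <= m)%N -> mW [set z : WW R | (z i).1 = t].
Proof.
move=> hi; apply: sub_gen_smallest.
exists (fun l => if l == i then Some t else None), (fun _ => setT); split => //.
apply/seteqP; split => z /=.
- by move=> h l hl; case: eqP => [->|] //=.
- by move=> h; have := h i hi; rewrite eqxx; case.
Qed.

Lemma mW_snd i (B : set R) : (i <= m)%N -> measurable B -> mW [set z : WW R | B (z i).2].
Proof.
move=> hi mB; apply: sub_gen_smallest.
exists (fun _ => None), (fun l => if l == i then B else setT); split.
  by move=> l; case: eqP.
apply/seteqP; split => z /=.
- by move=> h l hl; case: eqP => [->|] //=.
- by move=> h; have := h i hi; rewrite eqxx; case.
Qed.

Lemma mW_lt i k : (i <= m)%N -> (k <= m)%N -> mW [set z : WW R | (z i).2 < (z k).2].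
Proof.
move=> hi hk.
have -> : [set z : WW R | (z i).2 < (z k).2] =
  \bigcup_(q : rat) ([set z : WW R | [set` `]-oo, ratr q[] (z i).2] `&`
                      [set z : WW R | [set` `]ratr q, +oo[] (z k).2]).
  apply/seteqP; split => z /=.
  - move=> /rat_in_itvoo [q]; rewrite in_itv /= => /andP [h1 h2].
    by exists q => //; rewrite /= !in_itv /= h1 h2.
  - case=> q _ []; rewrite /= !in_itv /= andbT => h1 h2; exact: lt_trans h1 h2.
apply: bigcupT_measurable_rat => q; apply: measurableI.
  exact: mW_snd (measurable_itv _).
exact: mW_snd (measurable_itv _).
Qed.

Lemma mW_fst_in i (A : set nat) : (i <= m)%N -> mW [set z : WW R | A (z i).1].
Proof.
move=> hi.
have -> : [set z : WW R | A (z i).1] = \bigcup_(t in A) [set z : WW R | (z i).1 = t].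
  by apply/seteqP; split => z /=; [move=> h; exists (z i).1 | case=> t At ->].
by apply: bigcup_measurable => t _; exact: mW_fst.
Qed.

Lemma mW_ind i : (i <= m)%N -> mW [set z : WW R | ind i z = 1%N].
Proof.
move=> hi.
have -> : [set z : WW R | ind i z = 1%N] =
  \bigcup_t ([set z : WW R | (z 0%N).1 = t] `&`
     ([set z : WW R | ltn' (z i).1 t] `|`
      ([set z : WW R | (z i).1 = t] `&` [set z : WW R | (z i).2 < (z 0%N).2]))).
  apply/seteqP; split => z /=.
  - by move=> /ind1 h; exists (z 0%N).1.
  - by case=> t _ [<- h]; apply/ind1; case: h => [h|[h1 h2]]; [left | right].
apply: bigcupT_measurable => t; apply: measurableI; first exact: mW_fst.
apply: measurableU; first exact: (mW_fst_in i [set s | ltn' s t]).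
by apply: measurableI; [exact: mW_fst | exact: mW_lt].
Qed.

Lemma rkS n z : rk n.+1 z = (rk n z + ind n.+1 z)%N.
Proof. by rewrite /rk big_nat_recr. Qed.

Lemma mW_rk n k : (n <= m)%N -> mW [set z : WW R | rk n z = k].
Proof.
elim: n k => [|n IH] k hn.
  have -> : [set z : WW R | rk 0 z = k] = [set _ | 0%N = k].
    by apply/seteqP; split => z /=; rewrite /rk big_geq.
  exact: mW_const.
have -> : [set z : WW R | rk n.+1 z = k] =
  ([set z : WW R | rk n z = k] `&` ~` [set z : WW R | ind n.+1 z = 1%N]) `|`
  ([set z : WW R | rk n z = k.-1] `&` [set z : WW R | ind n.+1 z = 1%N] `&` [set _ | (0 < k)%N]).
  apply/seteqP; split => z /=; rewrite rkS; move: (ind_le1 n.+1 z); lia.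
apply: measurableU.
  by apply: measurableI; [apply: IH; lia | apply: measurableC; exact: mW_ind].
apply: measurableI; last exact: mW_const.
by apply: measurableI; [apply: IH; lia | exact: mW_ind].
Qed.


Definition Iset j := [set z : WW R | (j <= m)%N /\ ind j z = 1%N].

Lemma mW_Iset j : mW (Iset j).
Proof.
have [hj|hj] := boolP (j <= m)%N.
  rewrite (_ : Iset j = [set z : WW R | ind j z = 1%N]); first exact: mW_ind.
  by apply/seteqP; split => z /=; [case | split].
rewrite (_ : Iset j = set0) //; apply/seteqP; split => z /=; last by [].
by case=> h; move: hj; rewrite h.
Qed.

Definition E k := Z @^-1` [set z : WW R | rk m z = k].
Definition I j := Z @^-1` Iset j.

Lemma mE k : measurable (E k).
Proof. exact: (mZ _ (mW_rk m k (leqnn m))). Qed.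

Lemma mI j : measurable (I j).
Proof. exact: (mZ _ (mW_Iset j)). Qed.

Lemma ind_sw j (h1 : (1 <= j)%N) (h2 : (j <= m)%N) i (z : WW R) :
  ind i (fun l => z (sw j l)) = ind (sw j i) z.
Proof. by rewrite /ind (sw0 j h1 h2). Qed.

Lemma rk_sw j (h1 : (1 <= j)%N) (h2 : (j <= m)%N) (z : WW R) :
  rk m (fun l => z (sw j l)) = rk m z.
Proof.
rewrite /rk; under eq_bigr do rewrite (ind_sw j h1 h2).
have := @big_inv _ _ (addn : Monoid.com_law 0%N) 1 m.+1 (sw j) (fun i => ind i z).
apply.
  move=> i /andP [hi1 hi2]; apply/andP; split; first exact: (sw_ge1 j h1 h2).
  exact: (sw_range j).
by move=> i _; exact: (sw_inv j).
Qed.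

Lemma sym_EI k j : (1 <= j)%N -> (j <= m)%N -> P (E k `&` I j) = P (E k `&` I m).
Proof.
move=> h1 h2.
rewrite /E /I -!preimage_setI.
rewrite (sym j h1 h2 ([set z : WW R | rk m z = k] `&` Iset j)); last first.
  by apply: (@measurableI _ (g_sigma_algebraType GG)); [exact: mW_rk | exact: mW_Iset].
congr (P _); apply/seteqP; split => w /=; rewrite /Zsw /= rk_sw //.
- by case=> -> [_]; rewrite (ind_sw j) // /sw eqxx.
- by case=> -> [_] h; split => //; split => //; rewrite (ind_sw j h1 h2) /sw eqxx.
Qed.

Lemma count k : (\sum_(1 <= j < m.+1) P (E k `&` I j) = (k%:R)%:E * P (E k))%E.
Proof.
have h1 : forall j, P (E k `&` I j) = (\int[P]_(w in E k) (\1_(I j) w)%:E)%E.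
  by move=> j; rewrite (integral_indic P (mE k) (mI j)) setIC.
rewrite (eq_bigr _ (fun j _ => h1 j)).
have mf : forall j, measurable_fun (E k) (EFin \o (\1_(I j) : Omega -> R)).
  by move=> j; apply/measurable_EFinP; apply: measurable_indic; exact: mI.
have f0 : forall j w, E k w -> (0 <= (EFin \o (\1_(I j) : Omega -> R)) w)%E.
  by move=> j w _; rewrite /= lee_fin indicE ler0n.
rewrite -(ge0_integral_sum P (mE k) mf f0).
rewrite -(integral_cst P (mE k)).
apply: eq_integral => w; rewrite inE => hw /=.
rewrite sumEFin; congr EFin.
transitivity ((rk m (Z w))%:R : R); last by rewrite hw.
rewrite /rk natr_sum; apply: eq_big_nat => j /andP [_ hj]; rewrite indicE.
have := ind_le1 j (Z w); case E1: (ind j (Z w)) => [|[|//]] _.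
  by rewrite memNset // /I /Iset /= E1; case.
by rewrite mem_set // /I /Iset /= E1; split.
Qed.

Lemma step (hm : (1 <= m)%N) :
  uniform_on_0m P (rank_stat lt X U m) m -> uniform_on_0m P (rank_stat lt X U m.-1) m.-1.
Proof.
move=> hu k hk.
have hpre : forall n l, rank_stat lt X U n @^-1` [set l] = Z @^-1` [set z | rk n z = l].
  by move=> n l; apply/seteqP; split => w /=; rewrite rank_Z.
have he : forall l, (l <= m)%N -> P (E l) = ((m.+1%:R)^-1)%:E.
  by move=> l hl; rewrite /E -hpre; exact: hu.
have fin : forall A, measurable A -> P A = (fine (P A))%:E.
  by move=> A mA; rewrite fineK //; exact: fin_num_measure.
have ha : forall l, (l <= m)%N -> fine (P (E l `&` I m)) * m%:R = l%:R * (m.+1%:R)^-1.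
  move=> l hl; have := count l; rewrite (he l hl).
  rewrite (@eq_big_nat _ _ _ 1 m.+1 _ (fun _ => P (E l `&` I m))); last first.
    by move=> j /andP [h1 h2]; apply: sym_EI.
  rewrite (fin (E l `&` I m)); last by apply: measurableI; [exact: mE | exact: mI].
  rewrite sumEFin sumr_const_nat subn1 /= -EFinM => -[] <-.
  by rewrite mulr_natr.
have hF : Z @^-1` [set z | rk m.-1 z = k] = (E k `&` ~` I m) `|` (E k.+1 `&` I m).
  have hr : forall z, rk m z = (rk m.-1 z + ind m z)%N.
    by move=> z; rewrite -{1}(prednK hm) rkS prednK.
  apply/seteqP; split => w /=; rewrite /E /I /Iset /= hr;
    move: (ind_le1 m (Z w)); lia.
have hE : E k = (E k `&` I m) `|` (E k `&` ~` I m) by rewrite -setIUr setUCr setIT.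
have mk := mE k; have mk1 := mE k.+1; have mIm := mI m.
have fP : forall A, measurable A -> P A \is a fin_num by move=> A mA; exact: fin_num_measure.
have mEI : forall l, measurable (E l `&` I m) by move=> l; apply: measurableI; [exact: mE|exact: mI].
have mEnI : measurable (E k `&` ~` I m) by apply: measurableI => //; exact: measurableC.
have d1 : (E k `&` ~` I m) `&` (E k.+1 `&` I m) = set0.
  by apply/seteqP; split => w //= [[h1 h2] [h3 h4]].
have d2 : (E k `&` I m) `&` (E k `&` ~` I m) = set0.
  by apply/seteqP; split => w //= [[h1 h2] [h3 h4]].
have := congr1 P hE; rewrite measureU //.
rewrite hpre hF measureU //.
rewrite (he k (leq_trans hk (leq_pred m))).
have hk1 : (k.+1 <= m)%N by rewrite -(prednK hm).
have := ha k (leq_trans hk (leq_pred m)); have := ha k.+1 hk1.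
move=> h1 h2 h3; move: h3.
rewrite -[X in _ = X + _]fineK; last exact: fP.
rewrite -[X in _ = _ + X]fineK; last exact: fP.
rewrite -[X in X + _ = _]fineK; last exact: fP.
rewrite -[X in _ + X = _]fineK; last exact: fP.
move: h1 h2.
set a := fine (P (E k `&` I m)); set a1 := fine (P (E k.+1 `&` I m)).
set b := fine (P (E k `&` ~` I m)).
move=> h1 h2 /= [] h3; rewrite -EFinD; congr EFin.
rewrite prednK //.
set e := (m.+1%:R)^-1 : R.
have hm0 : (m%:R : R) != 0 by rewrite pnatr_eq0 -lt0n.
have he1 : e * (m%:R + 1) = 1 by rewrite /e -natr1 mulVf.
have hb : b = e - a by rewrite /e h3; ring.
move: h1 h2; rewrite -/e => h1 h2.
apply: (mulIf hm0); rewrite mulVf // hb.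
move: h1 h2 he1; rewrite -natr1; nra.
Qed.

End A.

Theorem theorem3p4 (R : realType) (T : countType) (lt : rel T)
  (p q : T -> R)
  (d : measure_display) (Omega : measurableType d) (P : probability Omega R)
  (X : nat -> Omega -> T) (U : nat -> Omega -> R) (M : nat) :
  strict_total_order lt ->
  p <> q ->
  (forall i t, measurable (X i @^-1` [set t])) ->
  (forall i, measurable_fun setT (U i)) ->
  mutually_independent P X U ->
  (forall t, P (X 0%N @^-1` [set t]) = (q t)%:E) ->
  (forall j t, (1 <= j)%N -> P (X j @^-1` [set t]) = (p t)%:E) ->
  (forall i (B : set R), measurable B ->
     P (U i @^-1` B) = lebesgue_measure (B `&` `[0, 1]%classic)) ->
  (1 <= M)%N ->
  ~ uniform_on_0m P (rank_stat lt X U M) M ->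
  forall m : nat, (M <= m)%N -> ~ uniform_on_0m P (rank_stat lt X U m) m.
Proof.
move=> [hirr _ _] _ hX hU hind _ hp hunif _ hnu m hMm hum; apply: hnu.
move: hum; rewrite -(subnK hMm); elim: (m - M)%N => [//|n IH] h.
apply: IH.
have := @step R T d Omega X U hX hU P p lt hind hp hunif hirr (n + M).+1 isT h.
by [].
Qed.
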